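(* Let $\mathcal{A}$ be a bounded PTA with clock set $X$, initial symbolic state $s_0$, and $T\subseteq L$ a set of target locations. Let $\vec M=(M(x))_{x\in X}$ with $M(x)=\mathrm{maxC}^x(\mathcal{A})$ for every clock $x$, and $\Phi=\mathrm{Ext}^X_{\vec M}$. Assume $\mathrm{EEF}_\Phi(\mathcal{A},s_0,T,\emptyset)$ terminates, with output $K$. Then (1) Soundness: for all $\nu\in K$, $T$ is reachable in $\nu(\mathcal{A})$; (2) Completeness: for every parameter valuation $\nu$ within the parameter domain, if $T$ is reachable in $\nu(\mathcal{A})$ then $\nu\in K$.
   Context: Clocks $X=\{x_1,\dots,x_H\}$ are real-valued variables; parameters $P=\{p_1,\dots,p_M\}$. A clock valuation is $v: X\to\mathbb{R}_{\ge 0}$, a parameter valuation is $\nu:P\to\mathbb{Q}$; $v+d$ adds $d$ to every clock; $v[R:=0]$ resets the clocks of $R$ to $0$. Linear constraints over $X\cup P$ (conjunctions of integer-coefficient linear inequalities) are identified with sets of valuations. A simple clock guard is $x \bowtie \sum_i \alpha_i p_i + z$ with $\alpha_i, z\in\mathbb{Z}$, ${\bowtie}\in\{<,\le,=,\ge,>\}$; a clock guard is a conjunction of simple clock guards. A PTA is $\mathcal{A}=(\Sigma,L,l_0,L_F,X,P,\mathbb{D},I,E)$: finite actions, finite locations $L$, initial $l_0$, accepting $L_F$, parameter domain $\mathbb{D}(p)=(\mathbb{D}^-(p),\mathbb{D}^+(p))\in(\mathbb{Q}\cup\{-\infty\})\times(\mathbb{Q}\cup\{+\infty\})$ with admissible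 values $[\mathbb{D}^-(p),\mathbb{D}^+(p)]$, invariants $I(l)$ (clock guards), edges $(l,g,a,R,l')$. $\mathcal{A}$ is bounded if all $\mathbb{D}^\pm(p)$ are finite. $G^x(\mathcal{A})$: simple clock guards among conjuncts of guards/invariants in which $x$ appears. $\nu(\mathcal{A})$: timed automaton obtained by substituting $\nu(p)$ for each $p$, with states $(l,v)$ satisfying $\nu(I(l))$, initial state $(l_0,\vec0)$, delay transitions (all intermediate states valid) and discrete transitions along edges whose guard $\nu(g)$ holds, resetting $R$. A run is an alternating sequence of states and (delay, edge) pairs from the initial state; $T$ is reachable in $\nu(\mathcal{A})$ if some run visits a location of $T$. Symbolic semantics: $C^{\nearrow}=\{(v+d,\nu)\mid(v,\nu)\in C,d\ge0\}$; $[C]_R$ resets clocks in $R$; $C\downarrow_P$ projection onto $P$. Symbolic state: $(l,C)$. $s_0=(l_0,(\bigwedge_ix_i=0)^{\nearrow}\wedge I(l_0)\wedge\bigwedge_j\mathbb{D}^-(p_j)\le p_j\le\mathbb{D}^+(p_j))$. For $e=(l,g,a,R,l')$, $\mathrm{Succ}((l,C),e)=(l',([C\wedge g]_R\wedge I(l'))^{\nearrow}\wedge I(l'))$, defined when nonempty. Extrapolation: $\mathrm{Cyl}_x(C)=\{w\mid\exists w'\in C,\ w'(y)=w(y)\ \forall y\ne x,\ w(x)\ge0\}$; $\mathrm{Ext}^x_M(C)=(C\cap(x\le M))\cup(\mathrm{Cyl}_x(C\cap(x>M))\cap(x>M))$; for $\vec M=(M(x))_{x\in X'}$, $\mathrm{Ext}^{X'}_{\vec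 M}$ is the composition of all $\mathrm{Ext}^x_{M(x)}$, $x\in X'$, acting on the constraint of a symbolic state. Maximal constant: for $g: x\bowtie\sum_i\alpha_ip_i+z$, $\mathrm{maxC}(g)=\sum_i\alpha_i\gamma_i+z$, $\gamma_i=\mathbb{D}^-(p_i)$ if $\alpha_i<0$, $\mathbb{D}^+(p_i)$ if $\alpha_i>0$, $0$ otherwise; $\mathrm{maxC}^x(\mathcal{A})=\max_{g\in G^x(\mathcal{A})}\mathrm{maxC}(g)$. Algorithm $\mathrm{EEF}_\Phi(\mathcal{A},s,T,\mathit{Pass})$ with $s=(l,C)$: if $l\in T$ return $C\downarrow_P$; else $K:=\emptyset$ and, if $s\notin\mathit{Pass}$, for each edge $e$ from $l$ with $\mathrm{Succ}(s,e)$ defined, $K:=K\cup\mathrm{EEF}_\Phi(\mathcal{A},\Phi(\mathrm{Succ}(s,e)),T,\mathit{Pass}\cup\{s\})$; return $K$. *)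

(* Defs.v *)
From HB Require Import structures.
From mathcomp Require Import all_boot all_order all_algebra.
From mathcomp Require Import reals.
From Stdlib Require List.

Set Implicit Arguments.
Unset Strict Implicit.
Unset Printing Implicit Defensive.

Import Order.TTheory GRing.Theory Num.Theory.
Local Open Scope ring_scope.

Inductive cmp := CLt | CLe | CEq | CGe | CGt.

Record sguard (H Mp : nat) := SGuard {
  sg_clock : 'I_H;
  sg_op : cmp;
  sg_coef : 'I_Mp -> int;
  sg_const : int }.

Definition guard (H Mp : nat) := seq (sguard H Mp).

Record edge (H Mp : nat) (Act Loc : Type) := Edge {
  e_src : Loc;
  e_guard : guard H Mp;
  e_act : Act;
  e_reset : {set 'I_H};
  e_dst : Loc }.

(* PTA (Sigma, L, l0, L_F, X = 'I_H, P = 'I_Mp, D, I, E).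
   Domain bounds: None in p_Dlo stands for -oo, None in p_Dhi for +oo. *)
Record pta (H Mp : nat) (Act Loc : finType) := PTA {
  p_l0 : Loc;
  p_LF : {set Loc};
  p_Dlo : 'I_Mp -> option rat;
  p_Dhi : 'I_Mp -> option rat;
  p_inv : Loc -> guard H Mp;
  p_edges : seq (edge H Mp Act Loc) }.

Definition bounded H Mp Act Loc (A : pta H Mp Act Loc) : Prop :=
  forall p, p_Dlo A p <> None /\ p_Dhi A p <> None.

Definition admissible H Mp Act Loc (A : pta H Mp Act Loc) (nu : 'I_Mp -> rat)
  : Prop :=
  forall p,
    (match p_Dlo A p with Some q => q <= nu p | None => True end) /\
    (match p_Dhi A p with Some q => nu p <= q | None => True end).

Definition cmpR (R : realType) (o : cmp) (a b : R) : bool :=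
  match o with
  | CLt => a < b | CLe => a <= b | CEq => a == b | CGe => b <= a | CGt => b < a
  end.

Definition sg_rhs H Mp (g : sguard H Mp) (nu : 'I_Mp -> rat) : rat :=
  \sum_(i < Mp) (sg_coef g i)%:~R * nu i + (sg_const g)%:~R.

Definition sg_sat (R : realType) H Mp (g : sguard H Mp)
  (v : 'I_H -> R) (nu : 'I_Mp -> rat) : bool :=
  cmpR (sg_op g) (v (sg_clock g)) (ratr (sg_rhs g nu)).

Definition g_sat (R : realType) H Mp (g : guard H Mp)
  (v : 'I_H -> R) (nu : 'I_Mp -> rat) : bool :=
  all (fun s => sg_sat s v nu) g.

Definition delay (R : realType) H (v : 'I_H -> R) (d : R) : 'I_H -> R :=
  fun x => v x + d.

Definition reset (R : realType) H (v : 'I_H -> R) (Rs : {set 'I_H}) : 'I_H -> R :=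
  fun x => if x \in Rs then 0 else v x.

Definition valid (R : realType) H Mp Act Loc (A : pta H Mp Act Loc)
  (nu : 'I_Mp -> rat) (s : Loc * ('I_H -> R)) : Prop :=
  (forall x, 0 <= s.2 x) /\ g_sat (p_inv A s.1) s.2 nu.

Definition ta_step (R : realType) H Mp Act Loc (A : pta H Mp Act Loc)
  (nu : 'I_Mp -> rat) (s s' : Loc * ('I_H -> R)) : Prop :=
  exists (d : R) (e : edge H Mp Act Loc),
    0 <= d /\
    (forall d' : R, 0 <= d' <= d -> valid A nu (s.1, delay s.2 d')) /\
    List.In e (p_edges A) /\ e_src e = s.1 /\
    g_sat (e_guard e) (delay s.2 d) nu /\
    s'.1 = e_dst e /\ (forall x, s'.2 x = reset (delay s.2 d) (e_reset e) x) /\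
    valid A nu s'.

Definition reachable (R : realType) H Mp Act Loc (A : pta H Mp Act Loc)
  (nu : 'I_Mp -> rat) (T : {set Loc}) : Prop :=
  exists (n : nat) (r : nat -> Loc * ('I_H -> R)),
    r 0%N = (p_l0 A, fun _ => 0) /\ valid A nu (r 0%N) /\
    (forall i, (i < n)%N -> ta_step A nu (r i) (r i.+1)) /\
    exists i, (i <= n)%N /\ (r i).1 \in T.

Definition sval (R : realType) H Mp := (('I_H -> R) * ('I_Mp -> rat))%type.
Definition constr (R : realType) H Mp := sval R H Mp -> Prop.
Definition sstate (R : realType) H Mp (Loc : Type) := (Loc * constr R H Mp)%type.

Definition andG (R : realType) H Mp (g : guard H Mp) (C : constr R H Mp)
  : constr R H Mp := fun w => C w /\ g_sat g w.1 w.2.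

Definition tshift (R : realType) H Mp (C : constr R H Mp) : constr R H Mp :=
  fun w => exists (d : R) (v0 : 'I_H -> R),
    0 <= d /\ C (v0, w.2) /\ forall x, w.1 x = v0 x + d.

Definition resetC (R : realType) H Mp (Rs : {set 'I_H}) (C : constr R H Mp)
  : constr R H Mp :=
  fun w => exists v0 : 'I_H -> R, C (v0, w.2) /\ forall x, w.1 x = reset v0 Rs x.

Definition projP (R : realType) H Mp (C : constr R H Mp) : ('I_Mp -> rat) -> Prop :=
  fun nu => exists v : 'I_H -> R, C (v, nu).

Definition s0 (R : realType) H Mp Act Loc (A : pta H Mp Act Loc)
  : sstate R H Mp Loc :=
  (p_l0 A,
   fun w => (exists d : R, 0 <= d /\ forall x, w.1 x = d) /\
            g_sat (p_inv A (p_l0 A)) w.1 w.2 /\ admissible A w.2).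

Definition Succ (R : realType) H Mp Act Loc (A : pta H Mp Act Loc)
  (s : sstate R H Mp Loc) (e : edge H Mp Act Loc) : sstate R H Mp Loc :=
  (e_dst e,
   andG (p_inv A (e_dst e))
     (tshift (andG (p_inv A (e_dst e)) (resetC (e_reset e) (andG (e_guard e) s.2))))).

Definition applicable (R : realType) H Mp Act Loc (A : pta H Mp Act Loc)
  (s : sstate R H Mp Loc) (e : edge H Mp Act Loc) : Prop :=
  e_src e = s.1 /\ exists w, (Succ A s e).2 w.

Definition Cyl (R : realType) H Mp (x : 'I_H) (C : constr R H Mp) : constr R H Mp :=
  fun w => exists w', C w' /\ (forall y, y != x -> w'.1 y = w.1 y) /\
                      (forall p, w'.2 p = w.2 p) /\ 0 <= w.1 x.

Definition Ext (R : realType) H Mp (x : 'I_H) (m : rat) (C : constr R H Mp)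
  : constr R H Mp :=
  fun w => (C w /\ w.1 x <= ratr m) \/
           (Cyl x (fun w' => C w' /\ ratr m < w'.1 x) w /\ ratr m < w.1 x).

Definition ExtX (R : realType) H Mp (Mv : 'I_H -> rat) (C : constr R H Mp)
  : constr R H Mp :=
  foldr (fun x C' => Ext x (Mv x) C') C (enum 'I_H).

Definition ExtS (R : realType) H Mp (Loc : Type) (Mv : 'I_H -> rat)
  (s : sstate R H Mp Loc) : sstate R H Mp Loc := (s.1, ExtX Mv s.2).

Definition maxC H Mp Act Loc (A : pta H Mp Act Loc) (g : sguard H Mp) : rat :=
  \sum_(i < Mp)
     (sg_coef g i)%:~R *
     (if sg_coef g i < 0 then odflt 0 (p_Dlo A i)
      else if 0 < sg_coef g i then odflt 0 (p_Dhi A i) else 0)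
  + (sg_const g)%:~R.

Definition Gx H Mp (Act Loc : finType) (A : pta H Mp Act Loc) (x : 'I_H)
  : seq (sguard H Mp) :=
  [seq g <- flatten ([seq e_guard e | e <- p_edges A] ++
                     [seq p_inv A l | l <- enum Loc])
     | sg_clock g == x].

(* maxC^x(A); convention 0 if x occurs in no guard / invariant *)
Definition maxCx H Mp Act Loc (A : pta H Mp Act Loc) (x : 'I_H) : rat :=
  match Gx A x with
  | [::] => 0
  | g :: gs => foldr (fun g' m => Num.max (maxC A g') m) (maxC A g) gs
  end.

Definition in_pass (R : realType) H Mp (Loc : Type)
  (s : sstate R H Mp Loc) (Pass : seq (sstate R H Mp Loc)) : Prop :=
  exists s', List.In s' Pass /\ s'.1 = s.1 /\ forall w, s'.2 w <-> s.2 w.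

(* EEF A T Phi s Pass K : the call EEF_Phi(A, s, T, Pass) terminates with
   output K.  EEF_edges A T Phi s Pass' es K : the loop over the edge list es
   (with the recursive calls using Pass' = Pass u {s}) terminates with K. *)
Inductive EEF (R : realType) H Mp (Act Loc : finType) (A : pta H Mp Act Loc)
  (T : {set Loc}) (Phi : sstate R H Mp Loc -> sstate R H Mp Loc)
  : sstate R H Mp Loc -> seq (sstate R H Mp Loc) -> (('I_Mp -> rat) -> Prop) -> Prop :=
| EEF_target : forall s Pass,
    s.1 \in T -> EEF A T Phi s Pass (projP s.2)
| EEF_passed : forall s Pass,
    s.1 \notin T -> in_pass s Pass -> EEF A T Phi s Pass (fun _ => False)
| EEF_explore : forall s Pass K,
    s.1 \notin T -> ~ in_pass s Pass ->
    EEF_edges A T Phi s (s :: Pass) (p_edges A) K ->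
    EEF A T Phi s Pass K
with EEF_edges (R : realType) H Mp (Act Loc : finType) (A : pta H Mp Act Loc)
  (T : {set Loc}) (Phi : sstate R H Mp Loc -> sstate R H Mp Loc)
  : sstate R H Mp Loc -> seq (sstate R H Mp Loc) -> seq (edge H Mp Act Loc) ->
    (('I_Mp -> rat) -> Prop) -> Prop :=
| EE_nil : forall s Pass, EEF_edges A T Phi s Pass [::] (fun _ => False)
| EE_skip : forall s Pass e es K,
    ~ applicable A s e -> EEF_edges A T Phi s Pass es K ->
    EEF_edges A T Phi s Pass (e :: es) K
| EE_step : forall s Pass e es K1 K2,
    applicable A s e ->
    EEF A T Phi (Phi (Succ A s e)) Pass K1 ->
    EEF_edges A T Phi s Pass es K2 ->
    EEF_edges A T Phi s Pass (e :: es) (fun nu => K1 nu \/ K2 nu).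

(* Main.v *)
Require Import Defs.
From HB Require Import structures.
From mathcomp Require Import all_boot all_order all_algebra.
From mathcomp Require Import reals.
From mathcomp Require Import lra.
From Stdlib Require Import Classical FunctionalExtensionality.

Set Implicit Arguments.
Unset Strict Implicit.
Unset Printing Implicit Defensive.
Import Order.TTheory GRing.Theory Num.Theory.
Local Open Scope ring_scope.

Lemma In_mem (T : eqType) (x : T) s : x \in s -> List.In x s.
Proof. elim: s => //= y s IH; rewrite in_cons => /orP [/eqP->|/IH]; auto. Qed.

Lemma In_filter T (p : pred T) x s : List.In x s -> p x -> List.In x (filter p s).
Proof. elim: s => //= y s IH [->|H] Hp; first by rewrite Hp; left.
case: (p y) => //; [right|]; auto. Qed.

Lemma In_catl T (x : T) s1 s2 : List.In x s1 -> List.In x (s1 ++ s2).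
Proof. elim: s1 => //= y s IH [->|/IH]; auto. Qed.
Lemma In_catr T (x : T) s1 s2 : List.In x s2 -> List.In x (s1 ++ s2).
Proof. elim: s1 => //= y s IH H; right; auto. Qed.

Lemma In_flatten T (x : T) s ss : List.In s ss -> List.In x s -> List.In x (flatten ss).
Proof. elim: ss => //= y ss IH [->|H] Hx; [exact: In_catl|apply: In_catr; auto]. Qed.

Lemma In_map T U (f : T -> U) x s : List.In x s -> List.In (f x) (map f s).
Proof. elim: s => //= y s IH [->|/IH]; auto. Qed.

Lemma cmpR_convex (R : realType) o (a c d d' : R) :
  cmpR o a c -> cmpR o (a + d) c -> 0 <= d' <= d -> cmpR o (a + d') c.
Proof.
case: o => /=; move=> h1 h2 /andP[h3 h4].
- lra. - lra.
- move/eqP: h1 h2 => h1 /eqP h2. apply/eqP. lra.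
- lra. - lra.
Qed.

Lemma cmpR_big (R : realType) o (a b c r : R) :
  c <= r -> r < a -> r < b -> cmpR o a c = cmpR o b c.
Proof.
move=> h1 h2 h3; case: o => /=.
- have -> : (a < c) = false by apply/negbTE; rewrite -leNgt; lra.
  have -> : (b < c) = false by apply/negbTE; rewrite -leNgt; lra. by [].
- have -> : (a <= c) = false by apply/negbTE; rewrite -ltNge; lra.
  have -> : (b <= c) = false by apply/negbTE; rewrite -ltNge; lra. by [].
- have -> : (a == c) = false by apply/negbTE/eqP; lra.
  have -> : (b == c) = false by apply/negbTE/eqP; lra. by [].
- have -> : (c <= a) by lra. have -> : (c <= b) by lra. by [].
- have -> : (c < a) by lra. have -> : (c < b) by lra. by [].
Qed.

Scheme EEF_mut := Induction for EEF Sort Prop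
  with EEF_edges_mut := Induction for EEF_edges Sort Prop.

Section Main.
Variables (R : realType) (H Mp : nat) (Act Loc : finType) (A : pta H Mp Act Loc).
Hypothesis bA : bounded A.

Definition MM := maxCx A.
Definition sim (v w : 'I_H -> R) := forall x, v x = w x \/ (ratr (MM x) < v x /\ ratr (MM x) < w x).

Lemma sim_refl v : sim v v. Proof. by move=> x; left. Qed.
Lemma sim_sym v w : sim v w -> sim w v.
Proof. move=> h x; case: (h x) => [->|[]]; [left|right]; auto. Qed.
Lemma sim_trans u v w : sim u v -> sim v w -> sim u w.
Proof.
move=> h1 h2 x; case: (h1 x) => [->|[a b]]; first exact: h2.
case: (h2 x) => [<-|[c d]]; right; auto.
Qed.

Lemma rhs_le g nu : admissible A nu -> sg_rhs g nu <= Defs.maxC A g.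
Proof.
move=> adm; rewrite /sg_rhs /Defs.maxC lerD2r; apply: ler_sum => i _.
case: (bA i) (adm i) => hlo hhi.
case: (p_Dlo A i) hlo => [lo|//] _; case: (p_Dhi A i) hhi => [hi|//] _ /= [Hlo Hhi].
set c := sg_coef g i.
have [cn|cp] := ltP c 0.
  have : (c%:~R : rat) < 0 by rewrite ltrz0.
  move=> h; nra.
have [cq|cq] := ltP 0 c.
  have : (0 : rat) < c%:~R by rewrite ltr0z.
  move=> h; nra.
have -> : c = 0 by apply/eqP; rewrite eq_le cq cp.
by rewrite mulr0z !mul0r.
Qed.

Lemma foldr_max_ge g0 gs g : List.In g (g0 :: gs) ->
  Defs.maxC A g <= foldr (fun g' m => Num.max (Defs.maxC A g') m) (Defs.maxC A g0) gs.
Proof.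
elim: gs => [|a gs IH] /=; first by case=> [->|[]].
move=> h; rewrite le_max; apply/orP.
case: h => [e|[e|h]]; first by right; apply: IH; left.
  by left; rewrite e.
by right; apply: IH; right.
Qed.

Lemma maxC_le g x : List.In g (Gx A x) -> Defs.maxC A g <= MM x.
Proof.
rewrite /MM /maxCx; case: (Gx A x) => [//|g0 gs] h; exact: foldr_max_ge.
Qed.

Definition inA (g : guard H Mp) := forall s, List.In s g -> List.In s (Gx A (sg_clock s)).

Lemma inA_inv l : inA (p_inv A l).
Proof.
move=> s hs; rewrite /Gx; apply: In_filter => //.
apply: (In_flatten (s := p_inv A l)) => //; apply: In_catr; apply: In_map.
by apply: In_mem; rewrite mem_enum.
Qed.

Lemma inA_edge e : List.In e (p_edges A) -> inA (e_guard e).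
Proof.
move=> he s hs; rewrite /Gx; apply: In_filter => //.
apply: (In_flatten (s := e_guard e)) => //; apply: In_catl; exact: In_map.
Qed.

Arguments inA_inv : clear implicits.
Arguments inA_edge : clear implicits.

Lemma gsat_sim g v v' nu : admissible A nu -> inA g -> sim v v' ->
  g_sat g v nu = g_sat g v' nu.
Proof.
move=> adm; elim: g => [//|s g IH] hA hs; rewrite /g_sat /=.
have e : g_sat g v nu = g_sat g v' nu by apply: IH => // t ht; apply: hA; right.
rewrite -/(g_sat g v nu) -/(g_sat g v' nu) e.
congr andb; rewrite /sg_sat.
case: (hs (sg_clock s)) => [->//|[h1 h2]].
apply: (cmpR_big _ _ h1 h2).
rewrite ler_rat; apply: (le_trans (rhs_le s adm)); apply: maxC_le; by apply: hA; left.
Qed.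


Lemma gsat_convex (g : guard H Mp) (v : 'I_H -> R) d d' nu : g_sat g v nu -> g_sat g (delay v d) nu -> 0 <= d' <= d ->
  g_sat g (delay v d') nu.
Proof.
elim: g => [//|s g IH]; rewrite /g_sat /= => /andP[h1 h2] /andP[h3 h4] hd.
apply/andP; split; last exact: IH.
rewrite /sg_sat /delay in h1 h3 *; exact: cmpR_convex h1 h3 hd.
Qed.

Lemma sim_delay a b d : 0 <= d -> sim a b -> sim (delay a d) (delay b d).
Proof.
move=> hd h x; rewrite /delay; case: (h x) => [->|[h1 h2]]; [left|right] => //; split; lra.
Qed.

Lemma sim_reset a b (Rs : {set 'I_H}) : sim a b -> sim (reset a Rs) (reset b Rs).
Proof. move=> h x; rewrite /reset; case: (x \in Rs); [by left|exact: h]. Qed.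

Lemma ExtX_sim_l (C : constr R H Mp) l w :
  foldr (fun x C' => Ext x (MM x) C') C l w -> exists w', C w' /\ sim w'.1 w.1 /\ w'.2 = w.2.
Proof.
elim: l w => [|x l IH] w /=; first by move=> h; exists w; split => //; split => //; exact: sim_refl.
case=> [[hC _]|[[w2 [[hC2 hlt] [hy [hp _]]]] hlt2]]; first exact: IH.
have [w3 [h3 [hs3 hp3]]] := IH _ hC2.
exists w3; split => //; split; last by rewrite hp3; apply: functional_extensionality.
apply: (sim_trans hs3) => y; case: (eqVneq y x) => [->|ne]; first by right.
by left; apply: hy.
Qed.

Lemma ExtX_sim (C : constr R H Mp) w :
  ExtX MM C w -> exists w', C w' /\ sim w'.1 w.1 /\ w'.2 = w.2.
Proof. exact: ExtX_sim_l. Qed.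

Lemma ExtX_ext (C : constr R H Mp) w : (forall x, 0 <= w.1 x) -> C w -> ExtX MM C w.
Proof.
rewrite /ExtX; elim: (enum 'I_H) => [//|x l IH] /= hnn hC.
have hC' := IH hnn hC.
have [le|lt] := leP (w.1 x) (ratr (MM x)); first by left.
right; split => //; exists w; split => //; split => //; split => //.
Qed.

Lemma delay0 (v : 'I_H -> R) : delay v 0 = v.
Proof. by apply: functional_extensionality => x; rewrite /delay addr0. Qed.


Definition creach nu (l : Loc) (v : 'I_H -> R) :=
  exists n (r : nat -> Loc * ('I_H -> R)),
    r 0%N = (p_l0 A, fun _ => 0) /\ valid A nu (r 0%N) /\
    (forall i, (i < n)%N -> ta_step A nu (r i) (r i.+1)) /\ (r n).1 = l /\
    exists d, 0 <= d /\ (forall d', 0 <= d' <= d -> valid A nu (l, delay (r n).2 d')) /\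
              v = delay (r n).2 d.

Definition good (S : sstate R H Mp Loc) :=
  forall w, S.2 w -> admissible A w.2 /\ exists v, sim v w.1 /\ creach w.2 S.1 v.

Lemma good_succ S e : good S -> List.In e (p_edges A) -> e_src e = S.1 ->
  good (ExtS MM (Succ A S e)).
Proof.
move=> gS he hsrc [wv nu] /= hw.
have [[w1v nu1] [hw1 [hsim /= hnu]]] := ExtX_sim hw.
subst nu1.
case: hw1 => [[d [v0 [hd [[[u [[hSu hgu] hv0]] hinv0] hshift]]]] hinvw].
simpl in *.
have [hadm [u' [hsu [n [r [r0 [vr0 [hsteps [hrn [d0 [hd0 [hdel hu']]]]]]]]]]]] := gS _ hSu.
split => //.
have v0E : v0 = reset u (e_reset e) by apply: functional_extensionality.
have w1E : w1v = delay v0 d by apply: functional_extensionality.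
have hu'v : valid A nu (S.1, u') by rewrite hu'; apply: hdel; rewrite lexx hd0.
set s' := (e_dst e, reset u' (e_reset e)).
have nn' : forall x, 0 <= s'.2 x.
  by move=> x; rewrite /s' /reset /=; case: (x \in e_reset e) => //; exact: hu'v.1.
have hsimr : sim (reset u' (e_reset e)) v0 by rewrite v0E; apply: sim_reset.
have hinvs' : g_sat (p_inv A (e_dst e)) (reset u' (e_reset e)) nu.
  by rewrite (gsat_sim hadm (inA_inv _) hsimr).
have hstep : ta_step A nu (r n) s'.
  exists d0, e; split => //; split; first by rewrite hrn.
  split => //; split; first by rewrite hsrc.
  split.
    by rewrite -hu' (gsat_sim hadm (inA_edge _ he) hsu).
  split => //; split; first by move=> x; rewrite /s' hu'.
  by split.
exists (delay (reset u' (e_reset e)) d); split.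
  apply: (sim_trans (sim_delay hd hsimr)); by rewrite -w1E.
exists n.+1, (fun i => if (i <= n)%N then r i else s').
split; first by rewrite leq0n.
split; first by rewrite leq0n.
split.
  move=> i hi; have [lt|ge] := ltnP i n.
    rewrite (ltnW lt) /=; exact: hsteps.
  have ein : i = n by apply/eqP; rewrite eqn_leq ge -ltnS hi.
  by rewrite ein leqnn.
rewrite ltnn; split => //.
exists d; split => //; split => // d' hd'.
split; first by move=> x; rewrite /delay /=; have := nn' x; rewrite /s' /=; case/andP: hd' => ? ?; lra.
rewrite /=.
have hs2 : sim (delay (reset u' (e_reset e)) d') (delay v0 d') by apply: sim_delay => //; case/andP: hd'.
rewrite (gsat_sim hadm (inA_inv _) hs2).
apply: (gsat_convex (d:=d) hinv0) => //; by rewrite -w1E.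
Qed.

Variable T : {set Loc}.
Hypothesis hval : forall nu, admissible A nu -> valid A nu (p_l0 A, fun _ => 0%R : R).

Lemma good_s0 : good (s0 R A).
Proof.
move=> [wv nu] /= [[d [hd hx]] [hinv hadm]]; split => //.
have wE : wv = delay (fun _ => 0) d.
  by apply: functional_extensionality => x; rewrite hx /delay add0r.
exists wv; split; first exact: sim_refl.
exists 0%N, (fun _ => (p_l0 A, fun _ => 0)); split => //; split; first exact: hval.
split => //; split => //; exists d; split => //; split => // d' hd'.
split; first by move=> x; rewrite /delay /= add0r; case/andP: hd'.
apply: (gsat_convex (d:=d)) => //; first exact: (hval hadm).2.
by rewrite -wE.
Qed.

Lemma soundness s Pass K : EEF A T (ExtS MM) s Pass K ->
  good s -> forall nu, K nu -> reachable R A nu T.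
Proof.
move=> h.
refine (EEF_mut (P := fun s Pass K _ => good s -> forall nu, K nu -> reachable R A nu T)
  (P0 := fun s Pass es K _ => good s -> (forall e, List.In e es -> List.In e (p_edges A)) ->
     forall nu, K nu -> reachable R A nu T) _ _ _ _ _ _ h).
- move=> s1 P1 hT gs nu [v hv].
  have [_ [v' [_ [n [r [r0 [vr0 [hst [hrn _]]]]]]]]] := gs _ hv.
  exists n, r; split => //; split => //; split => //; exists n; split => //.
  by rewrite hrn.
- by [].
- move=> s1 P1 K1 _ _ e IH gs; apply: IH => //.
- by [].
- move=> s1 P1 e es K3 _ e0 IH gs hes; apply: IH => // e' he'; apply: hes; right; exact: he'.
- move=> s1 P1 e es K1 K2 [hsrc _] e0 IH1 e1 IH2 gs hes nu [h1|h2].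
    apply: (IH1 _ nu h1); apply: good_succ => //; apply: hes; by left.
  apply: (IH2 gs _ nu h2) => e' he'; apply: hes; right; exact: he'.
Qed.

Definition delayOK nu (c : Loc * ('I_H -> R)) d :=
  0 <= d /\ forall d', 0 <= d' <= d -> valid A nu (c.1, delay c.2 d').
Definition inS (S : sstate R H Mp Loc) nu (c : Loc * ('I_H -> R)) :=
  S.1 = c.1 /\ forall d, delayOK nu c d -> S.2 (delay c.2 d, nu).
Fixpoint reach_in nu (k : nat) (c : Loc * ('I_H -> R)) : Prop :=
  match k with
  | 0%N => c.1 \in T
  | k.+1 => exists c', ta_step A nu c c' /\ reach_in nu k c'
  end.
Definition Pt S nu m := exists c, valid A nu c /\ inS S nu c /\ reach_in nu m c.

Definition step_e nu (e : edge H Mp Act Loc) (s s' : Loc * ('I_H -> R)) : Prop :=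
    exists d : R, 0 <= d /\
    (forall d' : R, 0 <= d' <= d -> valid A nu (s.1, delay s.2 d')) /\
    List.In e (p_edges A) /\ e_src e = s.1 /\
    g_sat (e_guard e) (delay s.2 d) nu /\
    s'.1 = e_dst e /\ (forall x, s'.2 x = reset (delay s.2 d) (e_reset e) x) /\
    valid A nu s'.

Lemma step_of nu c c' : ta_step A nu c c' -> exists e, step_e nu e c c'.
Proof. by case=> d [e h]; exists e, d. Qed.

Lemma delayOK0 nu c : valid A nu c -> delayOK nu c 0.
Proof.
move=> hv; split => // d' hd'.
have -> : d' = 0 by apply/eqP; rewrite eq_le; case/andP: hd' => -> ->.
by rewrite delay0; case: c hv.
Qed.

Lemma succ_mem S nu e c c' d2 : inS S nu c -> step_e nu e c c' -> delayOK nu c' d2 ->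
  (Succ A S e).2 (delay c'.2 d2, nu).
Proof.
move=> [hS1 hS2] [d [hd [hdel [he [hsrc [hg [hc1 [hc2 hvc]]]]]]]] [hd2 hdel2].
split; last by have := (hdel2 d2); rewrite hd2 lexx hc1 => /(_ isT) [].
exists d2, c'.2; split => //; split => //.
split; last by rewrite -hc1; case: hvc.
exists (delay c.2 d); split => //; split => //; apply: hS2; split => //.
Qed.

Lemma succ_inS S nu e c c' : inS S nu c -> step_e nu e c c' ->
  inS (ExtS MM (Succ A S e)) nu c'.
Proof.
move=> hS hst; split.
  by case: hst => [d [_ [_ [_ [_ [_ [-> _]]]]]]].
move=> d2 hd2; apply: ExtX_ext; last exact: (succ_mem hS hst hd2).
move=> x; case: hd2 => h0 h; have [] := h d2; first by rewrite h0 lexx.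
by move=> /(_ x).
Qed.

Lemma minimal (P : nat -> Prop) m : P m ->
  exists m0, (m0 <= m)%N /\ P m0 /\ forall k, (k < m0)%N -> ~ P k.
Proof.
elim: m {-2}m (leqnn m) => [|n IH] m hm hP.
  exists m; split => //; split => // k hk; move: hm hk; rewrite leqn0 => /eqP ->.
  by [].
case: (classic (exists k, (k < m)%N /\ P k)) => [[k [hk hPk]]|hno].
  have [m0 [h1 [h2 h3]]] := IH k (leq_trans (leq_trans hk hm) (leqnn _)) hPk.
  exists m0; split => //; exact: leq_trans h1 (ltnW hk).
exists m; split => //; split => // k hk hPk; apply: hno; by exists k.
Qed.

Lemma completeness s Pass K : EEF A T (ExtS MM) s Pass K ->
  forall nu m, Pt s nu m -> (forall k, (k < m)%N -> ~ Pt s nu k) ->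
  (forall P, List.In P Pass -> forall k, (k <= m)%N -> ~ Pt P nu k) -> K nu.
Proof.
move=> h.
refine (EEF_mut (P := fun s Pass K _ => forall nu m, Pt s nu m -> (forall k, (k < m)%N -> ~ Pt s nu k) ->
  (forall P, List.In P Pass -> forall k, (k <= m)%N -> ~ Pt P nu k) -> K nu)
  (P0 := fun s Pass es K _ => forall nu c c' e m, valid A nu c -> inS s nu c ->
     List.In e es -> step_e nu e c c' -> reach_in nu m c' ->
     (forall P, List.In P Pass -> forall k, (k <= m)%N -> ~ Pt P nu k) -> K nu) _ _ _ _ _ _ h).
- move=> s1 P1 hT nu m [c [hv [[hs1 hs2] _]]] _ _.
  exists c.2; rewrite -(delay0 c.2); apply: hs2; exact: delayOK0.
- move=> s1 P1 hT [s' [hin [h1 h2]]] nu m [c [hv [[hs1 hs2] hr]]] _ hP.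
  apply: (hP s' hin m (leqnn m)); exists c; split => //; split => //.
  split; first by rewrite h1.
  by move=> d hd; apply/h2; apply: hs2.
- move=> s1 P1 K1 hT _ e0 IH nu m [c [hv [hin hr]]] hmin hP.
  case: m hr hmin hP => [|m] /= hr hmin hP.
    by case: hin => hs1 _; move: hT; rewrite hs1 hr.
  case: hr => c' [hst hr].
  have [e he] := step_of hst.
  apply: (IH nu c c' e m hv hin _ he hr).
    by case: he => [d [_ [_ [? _]]]].
  move=> P [<-|hPin] k hk.
    by apply: hmin.
  by apply: hP => //; apply: (leq_trans hk).
- by move=> s1 P1 nu c c' e m _ _ [].
- move=> s1 P1 e es K3 hna e0 IH nu c c' e' m hv hin [E|hes] hst hr hP.
    exfalso; apply: hna; subst e'; split.
      by case: hst => [d [_ [_ [_ [-> _]]]]]; case: hin.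
    exists (delay c'.2 0, nu); apply: (succ_mem hin hst); apply: delayOK0.
    by case: hst => [d [_ [_ [_ [_ [_ [_ [_ ?]]]]]]]].
  exact: (IH nu c c' e' m hv hin hes hst hr hP).
- move=> s1 P1 e es K1 K2 ha e0 IH1 e1 IH2 nu c c' e' m hv hin [E|hes] hst hr hP.
    left; subst e'.
    have hc'v : valid A nu c' by case: hst => [d [_ [_ [_ [_ [_ [_ [_ ?]]]]]]]].
    have hPt : Pt (ExtS MM (Succ A s1 e)) nu m.
      by exists c'; split => //; split => //; exact: (succ_inS hin hst).
    have [m0 [hm0 [hPt0 hmin0]]] := minimal hPt.
    apply: (IH1 nu m0 hPt0 hmin0) => P hPin k hk.
    apply: hP => //; exact: leq_trans hk hm0.
  right; exact: (IH2 nu c c' e' m hv hin hes hst hr hP).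
Qed.

End Main.

Lemma reach_run (R : realType) (H Mp : nat) (Act Loc : finType)
  (A : pta H Mp Act Loc) (T : {set Loc}) nu n (r : nat -> Loc * ('I_H -> R)) i :
  (forall j, (j < n)%N -> ta_step A nu (r j) (r j.+1)) -> (i <= n)%N -> (r i).1 \in T ->
  forall k j, (j + k = i)%N -> reach_in A T nu k (r j).
Proof.
move=> hst hin hT; elim=> [|k IH] j hj /=.
  by rewrite addn0 in hj; rewrite hj.
exists (r j.+1); split; last by apply: IH; rewrite -hj addSnnS.
apply: hst; apply: leq_trans hin; rewrite -hj; rewrite -addSnnS; exact: leq_addr.
Qed.


Theorem proposition1 (R : realType) (H Mp : nat) (Act Loc : finType)
  (A : pta H Mp Act Loc) (T : {set Loc}) (K : ('I_Mp -> rat) -> Prop) :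
  bounded A ->
  (* well-formedness of nu(A): the initial state (l0, 0) is a state *)
  (forall nu, admissible A nu -> valid A nu (p_l0 A, fun _ => 0%R : R)) ->
  EEF A T (@ExtS R H Mp Loc (maxCx A)) (s0 R A) [::] K ->
  (forall nu, K nu -> reachable R A nu T) /\
  (forall nu, admissible A nu -> reachable R A nu T -> K nu).
Proof.
move=> bA hval h; split.
  exact: (soundness bA h (good_s0 hval)).
move=> nu adm [n [r [r0 [vr0 [hst [i [hi hT]]]]]]].
have hPt : Pt A T (s0 R A) nu i.
  exists (r 0%N); split => //; split.
    split; first by rewrite r0.
    move=> d [hd hdel]; split.
      by exists d; split => // x; rewrite r0 /delay /= add0r.
    split => //.
    by have := hdel d; rewrite hd lexx r0 /= => /(_ isT) [].
  exact: (reach_run hst hi hT (add0n i)).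
have [m0 [_ [hPt0 hmin0]]] := minimal hPt.
exact: (completeness h hPt0 hmin0).
Qed.
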